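(* For any $m,n\geqslant 0$ and $N\geqslant 1$ and any $T\in V^{m,n}$, $$\tfrac12\big(E^i{}_jE^j{}_i+NE^i{}_i\big)T=\begin{cases}\mathscr{C}_{m,n}(T), & m,n\geqslant 1,\\ \mathscr{L}_m(T), & n=0,\\ \mathscr{R}_n(T)+Nn\,T, & m=0,\end{cases}$$ (summation over repeated indices). In particular, for $m,n\geqslant1$, $\mathscr{C}_{m,n}$ lies in the centre of $C_{m,n}(N)$.
   Context: $V$ is an $N$-dimensional complex vector space with basis $\{e_i\}$ and dual basis $\{e^i\}$ of $V^*$; $V^{m,n}=V^{\otimes m}\otimes V^{*\otimes n}$ ($V^{0,0}=\mathbb{C}$), with the diagonal action of $GL(N)$ (contragredient on $V^*$); $C_{m,n}(N)=\mathrm{End}_{GL(N)}(V^{m,n})$. The matrix units $E^i{}_j\in\mathfrak{gl}_N$ act by $E^i{}_j(e_k)=-e_j\delta^i_k$, $E^i{}_j(e^k)=\delta^k_je^i$, and act on $V^{m,n}$ as derivations (Leibniz rule over the tensor factors). $\tau_{ab}$ ($1\leqslant a<b\leqslant m$) swaps the $a$-th and $b$-th factors $V$, $\tau_{a'b'}$ swaps the $a'$-th and $b'$-th factors $V^*$. $\mathscr{L}_m=\sum_{a<b}\tau_{ab}$ if $m\geqslant2$ and $0$ otherwise; $\mathscr{R}_n=\sum_{a'<b'}\tau_{a'b'}$ if $n\geqslant 2$ and $0$ otherwise. For $1\leqslant a\leqslant m$, $1\leqslant b'\leqslant n$, $\tau_{ab'}$ is the map which contracts the $a$-th $V$-factor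 with the $b'$-th $V^*$-factor and then inserts $\sum_ke_k\otimes e^k$ in these two positions; $\mathscr{A}_{m,n}=\sum_{a,b'}\tau_{ab'}$, and $\mathscr{C}_{m,n}=\mathscr{L}_m+\mathscr{R}_n-\mathscr{A}_{m,n}+Nn$ for $m,n\geqslant 1$. *)

(* Defs.v *)
From HB Require Import structures.
From mathcomp Require Import all_boot all_order all_algebra all_fingroup all_field.
Set Implicit Arguments. Unset Strict Implicit. Unset Printing Implicit Defensive.
Import Order.TTheory GRing.Theory Num.Theory.
Local Open Scope ring_scope.

(* Basis of V = C^N indexed by 'I_N.  A tensor T in V^{m,n} is given by its
   coefficients on the basis e_{a_1}(x)...(x)e_{a_m}(x)e^{b_1}(x)...(x)e^{b_n},
   indexed by pairs (a,b) of multi-indices. *)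
Definition idx (N m n : nat) := ({ffun 'I_m -> 'I_N} * {ffun 'I_n -> 'I_N})%type.
Definition tensor (N m n : nat) := {ffun idx N m n -> algC^o}.

Definition upd (k N : nat) (f : {ffun 'I_k -> 'I_N}) (p : 'I_k) (i : 'I_N)
  : {ffun 'I_k -> 'I_N} := [ffun t => if t == p then i else f t].

(* Action of E^i_j : E(e_k) = - delta^i_k e_j, E(e^k) = delta^k_j e^i,
   extended as a derivation; written in coordinates. *)
Definition Eact (N m n : nat) (i j : 'I_N) (T : tensor N m n) : tensor N m n :=
  [ffun x : idx N m n =>
     \sum_(p < m) (if x.1 p == j then - T (upd x.1 p i, x.2) else 0)
   + \sum_(q < n) (if x.2 q == i then T (x.1, upd x.2 q j) else 0)].

Definition Casimir (N m n : nat) (T : tensor N m n) : tensor N m n :=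
  2%:R^-1 *: (\sum_(i < N) \sum_(j < N) Eact i j (Eact j i T)
              + N%:R *: \sum_(i < N) Eact i i T).

Definition tauV (N m n : nat) (a b : 'I_m) (T : tensor N m n) : tensor N m n :=
  [ffun x : idx N m n => T ([ffun t => x.1 (tperm a b t)], x.2)].
Definition tauVs (N m n : nat) (a b : 'I_n) (T : tensor N m n) : tensor N m n :=
  [ffun x : idx N m n => T (x.1, [ffun t => x.2 (tperm a b t)])].
(* tau_{ab'}: contract a-th V factor with b'-th V^* factor and insert
   sum_k e_k (x) e^k in these positions *)
Definition tauMix (N m n : nat) (a : 'I_m) (b : 'I_n) (T : tensor N m n)
  : tensor N m n :=
  [ffun x : idx N m n =>
     if x.1 a == x.2 b then \sum_(k < N) T (upd x.1 a k, upd x.2 b k) else 0].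

Definition Lop (N m n : nat) (T : tensor N m n) : tensor N m n :=
  \sum_(a < m) \sum_(b < m | (a < b)%N) tauV a b T.
Definition Rop (N m n : nat) (T : tensor N m n) : tensor N m n :=
  \sum_(a < n) \sum_(b < n | (a < b)%N) tauVs a b T.
Definition Aop (N m n : nat) (T : tensor N m n) : tensor N m n :=
  \sum_(a < m) \sum_(b < n) tauMix a b T.
Definition Cop (N m n : nat) (T : tensor N m n) : tensor N m n :=
  Lop T + Rop T - Aop T + (N * n)%:R *: T.

(* Diagonal action of g in GL(N) on V^{m,n}: g e_k = sum_l g_{lk} e_l,
   contragredient on V^*: g e^k = sum_l (g^-1)_{kl} e^l. *)
Definition glact (N m n : nat) (g : 'M[algC]_N) (T : tensor N m n)
  : tensor N m n :=
  [ffun x : idx N m n =>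
     \sum_(y : idx N m n)
        (\prod_(p < m) g (x.1 p) (y.1 p))
      * (\prod_(q < n) (invmx g) (y.2 q) (x.2 q)) * T y].

Definition gl_equivariant (N m n : nat) (f : tensor N m n -> tensor N m n) :=
  forall g : 'M[algC]_N, g \in unitmx ->
    forall T : tensor N m n, f (glact g T) = glact g (f T).

(* Main.v *)
Set Warnings "-notation-overridden -ambiguous-paths".
Require Import Defs.
From HB Require Import structures.
From mathcomp Require Import all_boot all_order all_algebra all_fingroup all_field.
From mathcomp Require Import ring.
Import GRing.Theory Num.Theory.
Local Open Scope ring_scope.

Lemma sum_eq_l (I : finType) (a : I) (F : I -> algC) :
  \sum_j (a == j)%:R * F j = F a.
Proof.
rewrite (bigD1 a) //= eqxx mul1r big1 ?addr0 // => j /negbTE.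
by rewrite eq_sym => ->; rewrite mul0r.
Qed.

Lemma sum_eq_c (I : finType) (a : I) (c : algC) :
  \sum_j (a == j)%:R * c = c.
Proof.
rewrite (bigD1 a) //= eqxx mul1r big1 ?addr0 // => j /negbTE.
by rewrite eq_sym => ->; rewrite mul0r.
Qed.

Section Upd.
Variables k N : nat.
Implicit Types (f : {ffun 'I_k -> 'I_N}) (p : 'I_k) (i : 'I_N).
Lemma updE f p i t : upd f p i t = if t == p then i else f t.
Proof. by rewrite ffunE. Qed.
Lemma upd_same f p i : upd f p i p = i.
Proof. by rewrite updE eqxx. Qed.
Lemma upd_other f p i t : t != p -> upd f p i t = f t.
Proof. by rewrite updE => /negbTE ->. Qed.
Lemma upd_upd f p i j : upd (upd f p i) p j = upd f p j.
Proof. by apply/ffunP => t; rewrite !updE; case: eqP. Qed.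
Lemma upd_id f p : upd f p (f p) = f.
Proof. by apply/ffunP => t; rewrite !updE; case: eqP => // ->. Qed.
Lemma upd_swap f p p' : p' != p ->
  upd (upd f p (f p')) p' (f p) = [ffun t => f (tperm p p' t)].
Proof.
move=> np; apply/ffunP => t; rewrite !ffunE.
case: (t =P p') => [->|/eqP tp']; first by rewrite tpermR.
case: (t =P p) => [->|/eqP tp]; first by rewrite tpermL.
by rewrite tpermD // eq_sym.
Qed.
End Upd.

Section Part1.
Variables N m n : nat.
Implicit Types (T U : tensor N m n) (x : idx N m n).

Lemma EactE i j U x : Eact i j U x =
  - \sum_p (x.1 p == j)%:R * U (upd x.1 p i, x.2)
  + \sum_q (x.2 q == i)%:R * U (x.1, upd x.2 q j).
Proof.
rewrite ffunE -sumrN; congr (_ + _); apply: eq_bigr => p _;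
by case: eqP => _; rewrite ?mul1r ?mul0r ?oppr0.
Qed.

Lemma sym_pairs k (F : 'I_k -> 'I_k -> algC) : (forall a b : 'I_k, F a b = F b a) ->
  \sum_a \sum_(b | b != a) F a b = 2%:R * \sum_(a : 'I_k) \sum_(b : 'I_k | (a < b)%N) F a b.
Proof.
move=> Fs; rewrite mulr_natl mulr2n.
have -> : \sum_a \sum_(b | b != a) F a b =
   \sum_(a : 'I_k) \sum_(b : 'I_k | (a < b)%N) F a b + \sum_(a : 'I_k) \sum_(b : 'I_k | (b < a)%N) F a b.
  rewrite -big_split; apply: eq_bigr => a _ /=.
  rewrite (bigID (fun b : 'I_k => (a < b)%N)) /=; congr (_ + _); apply: eq_bigl => b.
    by rewrite andb_idl // => ab; rewrite neq_ltn ab orbT.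
  by rewrite neq_ltn -leqNgt; case: ltngtP.
congr (_ + _).
rewrite [LHS](eq_bigr (fun a : 'I_k => \sum_(b : 'I_k) (if (b < a)%N then F a b else 0)));
  last by move=> a _; rewrite big_mkcond.
rewrite exchange_big /=; apply: eq_bigr => a _; rewrite [RHS]big_mkcond.
by apply: eq_bigr => b _; rewrite Fs.
Qed.

Lemma EE i j T x : Eact i j (Eact j i T) x =
    \sum_p (x.1 p == j)%:R * \sum_p' (upd x.1 p i p' == i)%:R * T (upd (upd x.1 p i) p' j, x.2)
  - \sum_p (x.1 p == j)%:R * \sum_q' (x.2 q' == j)%:R * T (upd x.1 p i, upd x.2 q' i)
  - \sum_q (x.2 q == i)%:R * \sum_p' (x.1 p' == i)%:R * T (upd x.1 p' j, upd x.2 q j)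
  + \sum_q (x.2 q == i)%:R * \sum_q' (upd x.2 q j q' == j)%:R * T (x.1, upd (upd x.2 q j) q' i).
Proof.
rewrite EactE.
under eq_bigr => p _ do rewrite EactE /= mulrDr mulrN.
under [X in _ + X]eq_bigr => q _ do rewrite EactE /= mulrDr mulrN.
rewrite !big_split /= !sumrN.
ring.
Qed.

Lemma G1 T x : \sum_i \sum_j
    \sum_p (x.1 p == j)%:R * \sum_p' (upd x.1 p i p' == i)%:R * T (upd (upd x.1 p i) p' j, x.2)
  = (N * m)%:R * T x + \sum_p \sum_(p' | p' != p) tauV p p' T x.
Proof.
under eq_bigr => i _ do rewrite exchange_big /=.
under eq_bigr => i _ do under eq_bigr => p _ do rewrite sum_eq_l.
rewrite exchange_big /=.
under eq_bigr => p _ do under eq_bigr => i _ do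
  rewrite (bigD1 p) //= upd_same eqxx mul1r upd_upd upd_id.
under eq_bigr => p _ do rewrite big_split /= sumr_const card_ord.
rewrite big_split /= sumr_const card_ord -surjective_pairing.
congr (_ + _); first by rewrite -mulrnA mulr_natl mulnC.
apply: eq_bigr => p _.
under eq_bigr => i _ do under eq_bigr => p' hp' do rewrite upd_other //.
rewrite exchange_big /=; apply: eq_bigr => p' hp'.
by rewrite sum_eq_l ffunE /= upd_swap // -surjective_pairing.
Qed.

Lemma G4 T x : \sum_i \sum_j
    \sum_q (x.2 q == i)%:R * \sum_q' (upd x.2 q j q' == j)%:R * T (x.1, upd (upd x.2 q j) q' i)
  = (N * n)%:R * T x + \sum_q \sum_(q' | q' != q) tauVs q q' T x.
Proof.
rewrite exchange_big /=.
under eq_bigr => j _ do rewrite exchange_big /=.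
under eq_bigr => j _ do under eq_bigr => q _ do rewrite sum_eq_l.
rewrite exchange_big /=.
under eq_bigr => q _ do under eq_bigr => j _ do
  rewrite (bigD1 q) //= upd_same eqxx mul1r upd_upd upd_id.
under eq_bigr => q _ do rewrite big_split /= sumr_const card_ord.
rewrite big_split /= sumr_const card_ord -surjective_pairing.
congr (_ + _); first by rewrite -mulrnA mulr_natl mulnC.
apply: eq_bigr => q _.
under eq_bigr => j _ do under eq_bigr => q' hq' do rewrite upd_other //.
rewrite exchange_big /=; apply: eq_bigr => q' hq'.
by rewrite sum_eq_l ffunE /= upd_swap // -surjective_pairing.
Qed.

Lemma AopE T x : Aop T x = \sum_p \sum_q
   (x.1 p == x.2 q)%:R * \sum_k T (upd x.1 p k, upd x.2 q k).
Proof.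
rewrite sum_ffunE; apply: eq_bigr => p _; rewrite sum_ffunE; apply: eq_bigr => q _.
by rewrite ffunE; case: eqP; rewrite ?mul1r ?mul0r.
Qed.

Lemma G2 T x : \sum_i \sum_j
    \sum_p (x.1 p == j)%:R * \sum_q' (x.2 q' == j)%:R * T (upd x.1 p i, upd x.2 q' i)
  = Aop T x.
Proof.
rewrite AopE.
under eq_bigr => i _ do rewrite exchange_big /=.
under eq_bigr => i _ do under eq_bigr => p _ do rewrite sum_eq_l.
rewrite exchange_big /=; apply: eq_bigr => p _.
rewrite exchange_big /=; apply: eq_bigr => q _.
by rewrite mulr_sumr; apply: eq_bigr => i _; rewrite eq_sym.
Qed.

Lemma G3 T x : \sum_i \sum_j
    \sum_q (x.2 q == i)%:R * \sum_p' (x.1 p' == i)%:R * T (upd x.1 p' j, upd x.2 q j)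
  = Aop T x.
Proof.
rewrite AopE exchange_big /=.
under eq_bigr => j _ do rewrite exchange_big /=.
under eq_bigr => j _ do under eq_bigr => q _ do rewrite sum_eq_l.
rewrite exchange_big /=.
under eq_bigr => q _ do rewrite exchange_big /=.
rewrite exchange_big /=; apply: eq_bigr => p _; apply: eq_bigr => q _.
by rewrite mulr_sumr.
Qed.

Lemma Gdiag T x : \sum_i Eact i i T x = (n%:R - m%:R) * T x.
Proof.
under eq_bigr => i _ do rewrite EactE.
rewrite big_split /= sumrN exchange_big [X in _ + X]exchange_big /=.
have h1 p : \sum_i (x.1 p == i)%:R * T (upd x.1 p i, x.2) = T x.
  rewrite -[RHS](sum_eq_c _ (x.1 p) (T x)); apply: eq_bigr => i _.
  by case: eqP => [<-|]; rewrite ?mul0r // upd_id -surjective_pairing.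
have h2 q : \sum_i (x.2 q == i)%:R * T (x.1, upd x.2 q i) = T x.
  rewrite -[RHS](sum_eq_c _ (x.2 q) (T x)); apply: eq_bigr => i _.
  by case: eqP => [<-|]; rewrite ?mul0r // upd_id -surjective_pairing.
under eq_bigr => p _ do rewrite h1.
under [X in _ + X]eq_bigr => q _ do rewrite h2.
by rewrite !sumr_const !card_ord mulrBl !mulr_natl addrC.
Qed.

Lemma LopE T x : Lop T x = \sum_(a : 'I_m) \sum_(b : 'I_m | (a < b)%N) tauV a b T x.
Proof. by rewrite sum_ffunE; apply: eq_bigr => a _; rewrite sum_ffunE. Qed.
Lemma RopE T x : Rop T x = \sum_(a : 'I_n) \sum_(b : 'I_n | (a < b)%N) tauVs a b T x.
Proof. by rewrite sum_ffunE; apply: eq_bigr => a _; rewrite sum_ffunE. Qed.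

Lemma CopE T x : Cop T x = Lop T x + Rop T x - Aop T x + (N * n)%:R * T x.
Proof. by rewrite /Cop [LHS]ffunE [in LHS]ffunE [in LHS]ffunE [in LHS]ffunE [in LHS]ffunE. Qed.

Lemma CasE T x : Casimir T x = 2%:R^-1 * (\sum_i \sum_j Eact i j (Eact j i T) x + N%:R * \sum_i Eact i i T x).
Proof.
rewrite /Casimir [LHS]ffunE [in LHS]ffunE [in LHS]ffunE !sum_ffunE.
by congr (_ * (_ + _)); apply: eq_bigr => i _; rewrite sum_ffunE.
Qed.

Lemma Casimir_Cop T : Casimir T = Cop T.
Proof.
apply/ffunP => x; rewrite CasE CopE LopE RopE.
under eq_bigr => i _ do under eq_bigr => j _ do rewrite EE.
under eq_bigr => i _ do rewrite !big_split /= !sumrN.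
rewrite !big_split /= !sumrN G1 G2 G3 G4 Gdiag.
rewrite (sym_pairs _ (fun a b => tauV a b T x)); last first.
  by move=> a b; rewrite !ffunE tpermC.
rewrite (sym_pairs _ (fun a b => tauVs a b T x)); last first.
  by move=> a b; rewrite !ffunE tpermC.
rewrite natrM; by field.
Qed.
End Part1.

Lemma coef1_prod (I : eqType) (r : seq I) (F : I -> {poly algC}) : uniq r ->
  (\prod_(i <- r) F i)`_1 = \sum_(i <- r) (F i)`_1 * \prod_(j <- r | j != i) (F j)`_0.
Proof.
elim: r => [|h r IH] /=; first by rewrite !big_nil coefC.
case/andP => hr ur.
rewrite !big_cons coefM big_ord_recr big_ord1 /= IH // coef0_prod eqxx /=.
rewrite addrC; congr (_ + _).
  congr (_ * _); rewrite big_seq_cond [RHS]big_seq_cond; apply: eq_bigl => j.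
  case jr: (j \in r) => //=; symmetry; apply/eqP => ej; by move: hr; rewrite -ej jr.
rewrite mulr_sumr [LHS]big_seq [RHS]big_seq; apply: eq_bigr => i ir.
rewrite big_cons; have -> : (h != i) by apply/eqP => ei; rewrite ei ir in hr.
by rewrite mulrCA.
Qed.

Lemma prod_delta k N (x y : {ffun 'I_k -> 'I_N}) :
  \prod_q (x q == y q)%:R = (x == y)%:R :> algC.
Proof.
case: (x =P y) => [->|/eqP nxy]; first by rewrite big1 // => q _; rewrite eqxx.
have [q hq] : exists q, x q != y q.
  apply/existsP; move: nxy; apply: contraR; rewrite negb_exists => /forallP h.
  by apply/eqP/ffunP => q; move: (h q); rewrite negbK => /eqP.
by rewrite (bigD1 q) //= (negbTE hq) mul0r.
Qed.

Lemma loo k N (w : {ffun 'I_k -> 'I_N}) (p : 'I_k) (G : {ffun 'I_k -> 'I_N} -> algC) :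
  \sum_(y : {ffun 'I_k -> 'I_N}) (\prod_(p' | p' != p) (w p' == y p')%:R) * G y = \sum_l G (upd w p l).
Proof.
have key (y : {ffun 'I_k -> 'I_N}) : \prod_(p' | p' != p) (w p' == y p')%:R =
    \sum_l (upd w p l == y)%:R :> algC.
  case H: [forall p', (p' != p) ==> (w p' == y p')].
    rewrite big1; last by move=> p' hp; move/forallP: H => /(_ p'); rewrite hp /= => ->.
    rewrite (bigD1 (y p)) //= big1 ?addr0.
      suff -> : upd w p (y p) = y by rewrite eqxx.
      apply/ffunP => t; rewrite ffunE; case: eqP => [->//|/eqP tp].
      by move/forallP: H => /(_ t); rewrite tp /= => /eqP.
    move=> l hl; case: eqP => // e; move: hl; rewrite -e ffunE eqxx.
    by rewrite eqxx.
  move/negbT: H; rewrite negb_forall => /existsP [p' ]; rewrite negb_imply.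
  case/andP=> hp hw; rewrite (bigD1 p') //= (negbTE hw) mul0r.
  rewrite big1 // => l _; case: eqP => // e; move: hw; rewrite -e ffunE.
  by rewrite (negbTE hp) eqxx.
under eq_bigr => y _ do rewrite key mulr_suml.
rewrite exchange_big /=; apply: eq_bigr => l _.
by rewrite sum_eq_l.
Qed.



Lemma lin_coef0 (c a : algC) : (c%:P + a *: 'X)`_0 = c.
Proof. by rewrite coefD coefC coefZ coefX /= mulr0 addr0. Qed.
Lemma lin_coef1 (c a : algC) : (c%:P + a *: 'X)`_1 = a.
Proof. by rewrite coefD coefC coefZ coefX /= mulr1 add0r. Qed.
Lemma lin_coef0' (c a : algC) : (c%:P - a *: 'X)`_0 = c.
Proof. by rewrite coefB coefC coefZ coefX /= mulr0 subr0. Qed.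
Lemma lin_coef1' (c a : algC) : (c%:P - a *: 'X)`_1 = - a.
Proof. by rewrite coefB coefC coefZ coefX /= mulr1 sub0r. Qed.

Section Deriv.
Variables N m n : nat.
Implicit Types (T U : tensor N m n) (x y : idx N m n).

Definition Dop (A : 'M[algC]_N) T : tensor N m n :=
  [ffun x : idx N m n => \sum_p \sum_k A (x.1 p) k * T (upd x.1 p k, x.2)
           - \sum_q \sum_k A k (x.2 q) * T (x.1, upd x.2 q k)].

Variable A : 'M[algC]_N.

Definition cpoly x y : {poly algC} :=
  (\prod_p ((x.1 p == y.1 p)%:R%:P + A (x.1 p) (y.1 p) *: 'X))
* (\prod_q ((x.2 q == y.2 q)%:R%:P - A (y.2 q) (x.2 q) *: 'X)).

Definition PT T x := \sum_y T y *: cpoly x y.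

Lemma sum_pair (F : idx N m n -> algC) : \sum_y F y = \sum_y1 \sum_y2 F (y1, y2).
Proof. by rewrite pair_bigA; apply: eq_bigr => -[]. Qed.

Lemma PT_coef1 T x : (PT T x)`_1 = Dop A T x.
Proof.
rewrite coef_sum.
under eq_bigr => y _ do rewrite coefZ /cpoly coefM big_ord_recr big_ord1 /= !coef1_prod ?index_enum_uniq // !coef0_prod.
have E1 y : \prod_(i < m) (((x.1 i == y.1 i)%:R)%:P + A (x.1 i) (y.1 i) *: 'X)`_0
   = (x.1 == y.1)%:R.
  by rewrite -prod_delta; apply: eq_bigr => i _; rewrite lin_coef0.
have E2 y : \prod_(i < n) (((x.2 i == y.2 i)%:R)%:P - A (y.2 i) (x.2 i) *: 'X)`_0
   = (x.2 == y.2)%:R.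
  by rewrite -prod_delta; apply: eq_bigr => i _; rewrite lin_coef0'.
have E3 y : \sum_i (((x.2 i == y.2 i)%:R)%:P - A (y.2 i) (x.2 i) *: 'X)`_1 *
         \prod_(j | j != i) (((x.2 j == y.2 j)%:R)%:P - A (y.2 j) (x.2 j) *: 'X)`_0
  = \sum_i (\prod_(j | j != i) (x.2 j == y.2 j)%:R) * - A (y.2 i) (x.2 i).
  apply: eq_bigr => i _; rewrite lin_coef1' mulrC; congr (_ * _).
  by apply: eq_bigr => j _; rewrite lin_coef0'.
have E4 y : \sum_i (((x.1 i == y.1 i)%:R)%:P + A (x.1 i) (y.1 i) *: 'X)`_1 *
          \prod_(j | j != i) (((x.1 j == y.1 j)%:R)%:P + A (x.1 j) (y.1 j) *: 'X)`_0
  = \sum_i (\prod_(j | j != i) (x.1 j == y.1 j)%:R) * A (x.1 i) (y.1 i).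
  apply: eq_bigr => i _; rewrite lin_coef1 mulrC; congr (_ * _).
  by apply: eq_bigr => j _; rewrite lin_coef0.
under eq_bigr => y _ do rewrite E1 E2 E3 E4 mulrDr.
rewrite big_split /= !sum_pair ffunE addrC; congr (_ + _).
- rewrite exchange_big /=.
  under eq_bigr => y2 _ do under eq_bigr => y1 _ do rewrite (mulrC _ (x.2 == _)%:R) mulrCA.
  under eq_bigr => y2 _ do rewrite -mulr_sumr.
  rewrite sum_eq_l /=.
  under eq_bigr => y1 _ do rewrite mulr_sumr.
  rewrite exchange_big /=; apply: eq_bigr => p _.
  under eq_bigr => y1 _ do rewrite mulrCA.
  rewrite (loo _ _ x.1 p (fun y1 : {ffun 'I_m -> 'I_N} => T (y1, x.2) * A (x.1 p) (y1 p))).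
  by apply: eq_bigr => l _; rewrite upd_same mulrC.
- under eq_bigr => y1 _ do under eq_bigr => y2 _ do rewrite /= mulrCA.
  under eq_bigr => y1 _ do rewrite -mulr_sumr.
  rewrite sum_eq_l /=.
  under eq_bigr => y2 _ do rewrite mulr_sumr.
  rewrite exchange_big -sumrN /=; apply: eq_bigr => q _.
  under eq_bigr => y2 _ do rewrite mulrCA.
  rewrite (loo _ _ x.2 q (fun y2 : {ffun 'I_n -> 'I_N} => T (x.1, y2) * - A (y2 q) (x.2 q))).
  by rewrite -sumrN; apply: eq_bigr => l _; rewrite upd_same mulrN mulrC.
Qed.

Hypothesis A2 : A *m A = 0.

Lemma g_inv t : A *m A = 0 ->
  (1%:M + t *: A) *m (1%:M - t *: A) = 1%:M.
Proof.
move=> h; rewrite mulmxDl !mulmxBr !mul1mx !mulmx1 -scalemxAl -scalemxAr scalerA h.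
by rewrite scaler0 subr0 subrK.
Qed.

Lemma g_unit t : (1%:M + t *: A) \in unitmx.
Proof. by case: (mulmx1_unit (g_inv t A2)). Qed.

Lemma g_invmx t : invmx (1%:M + t *: A) = 1%:M - t *: A.
Proof.
have h := g_inv t A2.
transitivity (invmx (1%:M + t *: A) *m ((1%:M + t *: A) *m (1%:M - t *: A))).
  by rewrite h mulmx1.
by rewrite mulmxA mulVmx ?mul1mx // g_unit.
Qed.

Lemma glact_eval t T x : glact (1%:M + t *: A) T x = (PT T x).[t].
Proof.
rewrite ffunE horner_sum g_invmx; apply: eq_bigr => y _.
rewrite hornerZ /cpoly hornerM !horner_prod mulrC; congr (_ * _); congr (_ * _).
  by apply: eq_bigr => p _; rewrite !mxE hornerD hornerC hornerZ hornerX mulrC.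
by apply: eq_bigr => q _; rewrite !mxE hornerD hornerC hornerN hornerZ hornerX mulrC eq_sym.
Qed.

Lemma comm_D (f : {linear tensor N m n -> tensor N m n}) :
  gl_equivariant f -> forall T, f (Dop A T) = Dop A (f T).
Proof.
move=> eqf T.
pose d := (\max_(z : idx N m n * idx N m n) size (cpoly z.1 z.2)).+2.
have hs U x : (size (PT U x) <= d)%N.
  rewrite /PT; apply: (leq_trans (size_sum _ _ _)); apply/bigmax_leqP => y _.
  apply: (leq_trans (size_scale_leq _ _)).
  by apply: (leq_trans (leq_bigmax (F := fun z : idx N m n * idx N m n => size (cpoly z.1 z.2)) (x, y))); rewrite /d leqW // leqW.
pose Q k U : tensor N m n := [ffun x => (PT U x)`_k].
have hg U t : glact (1%:M + t *: A) U = \sum_(k < d) t ^+ k *: Q k U.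
  apply/ffunP => x; rewrite glact_eval sum_ffunE (horner_coef_wide _ (hs U x)).
  by apply: eq_bigr => k _; rewrite !ffunE mulrC.
have QD U : Q 1%N U = Dop A U by apply/ffunP => x; rewrite ffunE PT_coef1.
rewrite -!QD; apply/ffunP => x.
pose R := \poly_(k < d) (f (Q k T) x - Q k (f T) x).
have hR t : R.[t] = 0.
  rewrite horner_poly.
  have e := eqf _ (g_unit t) T; rewrite !hg linear_sum in e.
  have := congr1 (fun F : tensor N m n => F x) e.
  rewrite /= !sum_ffunE => /eqP; rewrite -subr_eq0 -sumrB => /eqP e'.
  rewrite -[RHS]e'; apply: eq_bigr => k _.
  by rewrite linearZ !ffunE mulrBl; congr (_ - _); exact: mulrC.
have R0 : R = 0.
  apply/eqP; apply: contraT => nz.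
  have := @max_poly_roots _ R [seq i%:R | i <- iota 0 (size R)] nz.
  rewrite size_map size_iota ltnn; apply.
    by apply/allP => z /mapP [i _ ->]; apply/rootP; exact: hR.
  by rewrite map_inj_uniq ?iota_uniq // => a b /eqP; rewrite eqr_nat => /eqP.
have := congr1 (fun p : {poly algC} => p`_1) R0; rewrite coef_poly coef0 /=.
by move/eqP; rewrite subr_eq0 => /eqP.
Qed.
End Deriv.



Lemma zaux (V : zmodType) (a b c d : V) : a - d = a + b - c - d - b + c.
Proof. by rewrite (addrAC _ (-d) (-b)) (addrAC _ (-c) (-b)) addrK (addrAC _ (-d) c) subrK. Qed.

Section Comm.
Variables N m n : nat.
Implicit Types (T U : tensor N m n).
Arguments Dop {N m n}.
Arguments EactE {N m n}.

Lemma DopD (A B : 'M[algC]_N) T : Dop (A + B) T = Dop A T + Dop B T.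
Proof.
apply/ffunP => x; rewrite !ffunE.
under eq_bigr => p _ do under eq_bigr => k _ do rewrite mxE mulrDl.
under [X in _ - X]eq_bigr => p _ do under eq_bigr => k _ do rewrite mxE mulrDl.
under eq_bigr => p _ do rewrite big_split /=.
under [X in _ - X]eq_bigr => p _ do rewrite big_split /=.
by rewrite !big_split /= opprD addrACA.
Qed.

Lemma DopN (A : 'M[algC]_N) T : Dop (- A) T = - Dop A T.
Proof.
apply/ffunP => x; rewrite !ffunE.
under eq_bigr => p _ do under eq_bigr => k _ do rewrite mxE mulNr.
under [X in _ - X]eq_bigr => p _ do under eq_bigr => k _ do rewrite mxE mulNr.
under eq_bigr => p _ do rewrite sumrN.
under [X in _ - X]eq_bigr => p _ do rewrite sumrN.
by rewrite !sumrN opprB addrC opprK.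
Qed.

Lemma Eact_D i j T : Eact i j T = - Dop (delta_mx j i) T.
Proof.
rewrite -DopN; apply/ffunP => x; rewrite EactE ffunE.
congr (_ + _).
  rewrite -sumrN; apply: eq_bigr => p _.
  case: eqP => [->|/eqP ne]; last by rewrite mul0r oppr0 big1 // => k _; rewrite !mxE (negbTE ne) andFb mulr0n oppr0 mul0r.
  rewrite (_ : true%:R = 1) // mul1r -(sum_eq_l _ i (fun k => - T (upd x.1 p k, x.2))).
  by apply: eq_bigr => k _; rewrite !mxE eqxx /= eq_sym mulrN mulNr.
rewrite -sumrN; apply: eq_bigr => q _; rewrite -sumrN.
case: eqP => [->|/eqP ne]; last by rewrite mul0r big1 ?oppr0 // => k _; rewrite !mxE (negbTE ne) andbF mulr0n oppr0 mul0r oppr0.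
rewrite (_ : true%:R = 1) // mul1r -(sum_eq_l _ j (fun k => T (x.1, upd x.2 q k))).
by apply: eq_bigr => k _; rewrite !mxE eqxx andbT eq_sym mulNr opprK.
Qed.

Lemma Bsq (i j : 'I_N) : i != j ->
  let B := delta_mx i i + delta_mx i j - delta_mx j i - delta_mx j j in
  B *m B = 0 :> 'M[algC]_N.
Proof.
move=> nij B; rewrite /B.
rewrite !(mulmxDl, mulmxDr, mulmxBl, mulmxBr, mulmxN, mulNmx, mul_delta_mx_cond) opprK !eqxx (negbTE nij) (eq_sym j i) (negbTE nij) !(mulr0n, mulr1n) !(subr0, add0r, addr0, oppr0, opprK, sub0r, mulNrn).
by rewrite -!opprD subrr add0r addNr.
Qed.


Lemma sumDii T : \sum_j Dop (delta_mx j j) T = (m%:R - n%:R) *: T.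
Proof.
apply/ffunP => x; rewrite sum_ffunE ffunE.
rewrite (_ : (m%:R - n%:R) *: T x = - ((n%:R - m%:R) * T x)); last by rewrite -mulNr opprB.
rewrite -Gdiag -sumrN.
by apply: eq_bigr => j _; rewrite Eact_D [in RHS]ffunE opprK.
Qed.

Variable f : {linear tensor N m n -> tensor N m n}.
Hypothesis eqf : gl_equivariant f.
Hypothesis N0 : (0 < N)%N.

Lemma comm_off a b T : a != b -> f (Dop (delta_mx a b) T) = Dop (delta_mx a b) (f T).
Proof.
move=> nab; apply: comm_D eqf T.
by rewrite mul_delta_mx_cond eq_sym (negbTE nab) mulr0n.
Qed.

Lemma comm_diff i j T :
  f (Dop (delta_mx i i) T - Dop (delta_mx j j) T) =
  Dop (delta_mx i i) (f T) - Dop (delta_mx j j) (f T).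
Proof.
case: (i =P j) => [->|/eqP nij]; first by rewrite !subrr linear0.
have e U : Dop (delta_mx i i) U - Dop (delta_mx j j) U =
   Dop (delta_mx i i + delta_mx i j - delta_mx j i - delta_mx j j) U
   - Dop (delta_mx i j) U + Dop (delta_mx j i) U.
  by rewrite !DopD !DopN -zaux.
rewrite !e linearD linearB (comm_D _ _ _ _ (Bsq i j nij) _ eqf) !comm_off // ?(eq_sym j i).
exact: nij.
Qed.

Lemma comm_ii i T : f (Dop (delta_mx i i) T) = Dop (delta_mx i i) (f T).
Proof.
have e U : Dop (delta_mx i i) U = N%:R^-1 *: (\sum_j Dop (delta_mx j j) U
   + \sum_j (Dop (delta_mx i i) U - Dop (delta_mx j j) U)).
  rewrite sumrB addrC subrK sumr_const card_ord -scaler_nat scalerA mulVf ?scale1r //.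
  by rewrite pnatr_eq0 -lt0n.
rewrite {1}(e T) (e (f T)) linearZZ linearD !sumDii linearZZ linear_sum; congr (_ *: (_ + _)).
by apply: eq_bigr => j _; rewrite comm_diff.
Qed.

Lemma comm_Eact i j T : f (Eact i j T) = Eact i j (f T).
Proof.
rewrite !Eact_D linearN; congr (- _).
case: (j =P i) => [->|/eqP nji]; first exact: comm_ii.
exact: comm_off.
Qed.

Lemma comm_Cas T : f (Casimir T) = Casimir (f T).
Proof.
rewrite /Casimir linearZZ linearD linearZZ; congr (_ *: (_ + _ *: _)); rewrite linear_sum.
  apply: eq_bigr => i _; rewrite linear_sum; apply: eq_bigr => j _.
  by rewrite !comm_Eact.
by apply: eq_bigr => i _; rewrite comm_Eact.
Qed.
End Comm.



Section Equiv.
Variables N m n : nat.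
Implicit Types (T U : tensor N m n).
Variable g : 'M[algC]_N.

Lemma glactD T1 T2 : glact g (T1 + T2) = glact g T1 + glact g T2.
Proof.
apply/ffunP => x; rewrite !ffunE -big_split /=; apply: eq_bigr => y _.
by rewrite ffunE mulrDr.
Qed.

Lemma glactZ c T : glact g (c *: T) = c *: glact g T.
Proof.
apply/ffunP => x; rewrite !ffunE [RHS]mulr_sumr; apply: eq_bigr => y _.
by rewrite ffunE mulrCA.
Qed.

Lemma glact0 : glact g (0 : tensor N m n) = 0.
Proof. by rewrite -(scale0r 0) glactZ !scale0r. Qed.

Lemma glactN T : glact g (- T) = - glact g T.
Proof. by rewrite -scaleN1r glactZ scaleN1r. Qed.

Lemma glact_sum (I : Type) (r : seq I) (P : pred I) (F : I -> tensor N m n) :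
  glact g (\sum_(i <- r | P i) F i) = \sum_(i <- r | P i) glact g (F i).
Proof. exact: (big_morph _ glactD glact0). Qed.

Lemma tauV_glact a b T : tauV a b (glact g T) = glact g (tauV a b T).
Proof.
apply/ffunP => x; rewrite !ffunE /=.
pose phi (y : idx N m n) : idx N m n := ([ffun t => y.1 (tperm a b t)], y.2).
have phiK : involutive phi.
  by move=> [y1 y2]; rewrite /phi /=; congr (_, _); apply/ffunP => t; rewrite !ffunE tpermK.
rewrite [RHS](reindex_inj (inv_inj phiK)); apply: eq_bigr => y _.
rewrite ffunE /=; congr (_ * _ * _); last by rewrite -[in LHS](phiK y).
rewrite [LHS](reindex_inj (@perm_inj _ (tperm a b))); apply: eq_bigr => p _.
by rewrite !ffunE tpermK.
Qed.

Lemma tauVs_glact a b T : tauVs a b (glact g T) = glact g (tauVs a b T).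
Proof.
apply/ffunP => x; rewrite !ffunE /=.
pose phi (y : idx N m n) : idx N m n := (y.1, [ffun t => y.2 (tperm a b t)]).
have phiK : involutive phi.
  by move=> [y1 y2]; rewrite /phi /=; congr (_, _); apply/ffunP => t; rewrite !ffunE tpermK.
rewrite [RHS](reindex_inj (inv_inj phiK)); apply: eq_bigr => y _.
rewrite ffunE /=; congr (_ * _ * _); last by rewrite -[in LHS](phiK y).
rewrite [LHS](reindex_inj (@perm_inj _ (tperm a b))); apply: eq_bigr => p _.
by rewrite !ffunE tpermK.
Qed.
End Equiv.

Section Mix.
Variables N m n : nat.
Implicit Types (T U : tensor N m n).
Variable g : 'M[algC]_N.
Hypothesis gu : g \in unitmx.

Lemma prod_upd k (w : {ffun 'I_k -> 'I_N}) (a : 'I_k) l (F : 'I_k -> 'I_N -> algC) :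
  \prod_(p | p != a) F p (upd w a l p) = \prod_(p | p != a) F p (w p).
Proof. by apply: eq_bigr => p hp; rewrite upd_other. Qed.

Lemma tauMix_glact a b T : tauMix a b (glact g T) = glact g (tauMix a b T).
Proof.
apply/ffunP => -[u v]; rewrite !ffunE /=.
pose Pg' (y1 : {ffun 'I_m -> 'I_N}) := \prod_(p | p != a) g (u p) (y1 p).
pose Pi' (y2 : {ffun 'I_n -> 'I_N}) := \prod_(q | q != b) invmx g (y2 q) (v q).
pose Z := \sum_(z : idx N m n) (z.1 a == z.2 b)%:R * (Pg' z.1 * Pi' z.2 * T z).
transitivity ((u a == v b)%:R * Z).
  case: eqP => _; last by rewrite mul0r.
  rewrite mul1r /Z.
  under eq_bigr => k _ do rewrite ffunE.
  rewrite exchange_big /=; apply: eq_bigr => y _.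
  have -> : \sum_k \prod_p g (upd u a k p) (y.1 p) * \prod_q invmx g (y.2 q) (upd v b k q) * T y
      = (\sum_k invmx g (y.2 b) k * g k (y.1 a)) * (Pg' y.1 * Pi' y.2 * T y).
    rewrite mulr_suml; apply: eq_bigr => k _.
    rewrite (bigD1 a) // (bigD1 (P := predT) b) //= upd_same upd_same.
    rewrite /Pg' /Pi' (prod_upd _ u a k (fun p => g^~ (y.1 p))).
    rewrite (prod_upd _ v b k (fun q => invmx g (y.2 q))).
    ring.
  congr (_ * _); have := congr1 (fun M : 'M_N => M (y.2 b) (y.1 a)) (mulVmx gu).
  by rewrite /= !mxE eq_sym.
pose S (y : idx N m n) (k : 'I_N) := (y.1 a == y.2 b)%:R * (g (u a) (y.1 a) * invmx g (y.2 b) (v b))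
   * (Pg' y.1 * Pi' y.2) * T (upd y.1 a k, upd y.2 b k).
transitivity (\sum_y \sum_k S y k); last first.
  apply: eq_bigr => y _; rewrite ffunE /S.
  case: eqP => e; last by rewrite mulr0 big1 // => k _; rewrite !mul0r.
  rewrite mulr_sumr; apply: eq_bigr => k _.
  rewrite (bigD1 a) // (bigD1 (P := predT) b) //= /Pg' /Pi' -e.
  ring.
rewrite pair_bigA /=.
pose phi (w : idx N m n * 'I_N) : idx N m n * 'I_N :=
  if w.1.1 a == w.1.2 b then ((upd w.1.1 a w.2, upd w.1.2 b w.2), w.1.1 a) else w.
have phiK : involutive phi.
  move=> [[y1 y2] k]; rewrite /phi /=.
  case e: (y1 a == y2 b) => /=; last by rewrite e.
  rewrite !upd_same eqxx /= !upd_upd upd_id; move/eqP: e => e.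
  by rewrite e upd_id.
rewrite (reindex_inj (inv_inj phiK)) /=.
have hS (w : idx N m n * 'I_N) : S (phi w).1 (phi w).2 = (w.1.1 a == w.1.2 b)%:R *
    (g (u a) w.2 * invmx g w.2 (v b)) * (Pg' w.1.1 * Pi' w.1.2 * T w.1).
  move: w => [[z1 z2] l]; rewrite /phi /S /=; case e: (z1 a == z2 b) => /=; last first.
    by rewrite e !mul0r.
  rewrite !upd_same eqxx /= /Pg' /Pi' (prod_upd _ z1 a l (fun p => g (u p))) (prod_upd _ z2 b l (fun q => invmx g^~ (v q))).
  rewrite !upd_upd upd_id; move/eqP: e => e; rewrite e upd_id.
  rewrite (_ : (1%N%:R : algC) = 1) //; ring.
under eq_bigr => w _ do rewrite hS.
rewrite -(pair_bigA _ (fun (z : idx N m n) (l : 'I_N) => (z.1 a == z.2 b)%:R *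
    (g (u a) l * invmx g l (v b)) * (Pg' z.1 * Pi' z.2 * T z))) /Z mulr_sumr.
apply: eq_bigr => z _.
have hI : \sum_l g (u a) l * invmx g l (v b) = (u a == v b)%:R.
  by have := congr1 (fun M : 'M_N => M (u a) (v b)) (mulmxV gu); rewrite /= !mxE.
rewrite -mulr_suml -mulr_sumr hI.
ring.
Qed.
End Mix.



Section Final.
Variables N m n : nat.
Implicit Types (T U : tensor N m n).

Lemma Cop_glact g : g \in unitmx -> forall T, Cop (glact g T) = glact g (Cop T).
Proof.
move=> gu T; rewrite /Cop !glactD glactN glactZ; congr (_ + _ - _ + _).
- rewrite /Lop glact_sum; apply: eq_bigr => a _; rewrite glact_sum; apply: eq_bigr => b _.
  by rewrite tauV_glact.
- rewrite /Rop glact_sum; apply: eq_bigr => a _; rewrite glact_sum; apply: eq_bigr => b _.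
  by rewrite tauVs_glact.
- rewrite /Aop glact_sum; apply: eq_bigr => a _; rewrite glact_sum; apply: eq_bigr => b _.
  by rewrite tauMix_glact.
Qed.

Definition linop (F : tensor N m n -> tensor N m n) :=
  forall (c : algC) T1 T2, F (c *: T1 + T2) = c *: F T1 + F T2.

Lemma linop_sum (I : finType) (P : pred I) (F : I -> tensor N m n -> tensor N m n) :
  (forall i, linop (F i)) -> linop (fun T => \sum_(i | P i) F i T).
Proof.
by move=> h c T1 T2; rewrite scaler_sumr -big_split; apply: eq_bigr => i _; rewrite h.
Qed.

Lemma Cop_lin : linop (@Cop N m n).
Proof.
have hL : linop (@Lop N m n).
  apply: linop_sum => a; apply: linop_sum => b c T1 T2.
  by apply/ffunP => x; rewrite !ffunE.
have hR : linop (@Rop N m n).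
  apply: linop_sum => a; apply: linop_sum => b c T1 T2.
  by apply/ffunP => x; rewrite !ffunE.
have hA : linop (@Aop N m n).
  apply: linop_sum => a; apply: linop_sum => b c T1 T2.
  apply/ffunP => x; rewrite !ffunE; case: ifP => _; last by rewrite scaler0 addr0.
  rewrite scaler_sumr -big_split; apply: eq_bigr => k _.
  by rewrite !ffunE.
move=> c T1 T2; rewrite /Cop hL hR hA.
set L1 := Lop T1; set L2 := Lop T2; set R1 := Rop T1; set R2 := Rop T2.
set A1 := Aop T1; set A2 := Aop T2.
apply/ffunP => x; rewrite !ffunE.
have sc (a b : algC) : a *: (b : algC^o) = a * b by [].
rewrite !sc.
ring.
Qed.
End Final.

Theorem lemma2p5 (N m n : nat) : (0 < N)%N ->
  (forall T : tensor N m n,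
     ((0 < m)%N -> (0 < n)%N -> Casimir T = Cop T)
  /\ (n = 0%N -> Casimir T = Lop T)
  /\ (m = 0%N -> Casimir T = Rop T + (N * n)%:R *: T))
  /\ ((0 < m)%N -> (0 < n)%N ->
      (* C_{m,n} lies in C_{m,n}(N) = End_{GL(N)}(V^{m,n}) ... *)
      gl_equivariant (@Cop N m n)
      /\ (forall T1 T2 : tensor N m n, forall c : algC,
            Cop (c *: T1 + T2) = c *: Cop T1 + Cop T2)
      (* ... and commutes with every element of C_{m,n}(N) *)
      /\ (forall f : {linear tensor N m n -> tensor N m n},
            gl_equivariant f -> forall T : tensor N m n, f (Cop T) = Cop (f T))).
Proof.
move=> N0; split.
  move=> T; split; first by move=> _ _; exact: Casimir_Cop.
  split.
    move=> n0; subst n; rewrite Casimir_Cop /Cop /Rop /Aop big_ord0.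
    rewrite big1 ?subr0 ?addr0 ?muln0 ?scale0r ?addr0 //.
    by move=> a _; rewrite big_ord0.
  move=> m0; subst m; rewrite Casimir_Cop /Cop /Lop /Aop !big_ord0.
  by rewrite add0r subr0.
move=> _ _; split; first exact: Cop_glact.
split; first by move=> T1 T2 c; exact: Cop_lin.
move=> f eqf T; rewrite -!Casimir_Cop.
exact: comm_Cas.
Qed.
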